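(* Fix integers $a,b\ge 2$ and $\varepsilon>0$. Let $n\to\infty$ and let $m=m(n)$ satisfy $m/n\to\infty$. Then all oriented hypergraphs $O\in\mathcal{O}(a,n,m)$, except for $o(|\mathcal{O}(a,n,m)|)$ of them, have the following property: for every coloring $C:[n]\to[b]$ and every $a$-tuple of colors $s=(s_1,\dots,s_a)\in[b]^a$, the number of hyperedges of $O$ whose color sequence with respect to $C$ is $s$ lies in the interval $\left[\left(\prod_{i=1}^a\frac{n_{s_i}^C}{n}-\varepsilon\right)m,\ \left(\prod_{i=1}^a\frac{n_{s_i}^C}{n}+\varepsilon\right)m\right]$.
   Context: An oriented $a$-uniform hypergraph on vertex set $[n]$ is a set of hyperedges, each an ordered sequence of $a$ distinct vertices, such that no two hyperedges consist of the same vertex set (i.e., an $a$-uniform hypergraph together with an independent total ordering of the vertices of each hyperedge). $\mathcal{O}(a,n,m)$ is the family of all oriented $a$-uniform hypergraphs on $[n]$ with exactly $m$ hyperedges. A coloring $C:[n]\to[b]$ is an arbitrary map; $n_j^C$ is the number of vertices of color $j$. The color sequence of a hyperedge $(v_1,\dots,v_a)$ is $(C(v_1),\dots,C(v_a))$. *)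

(* Defs.v *)
From HB Require Import structures.
From mathcomp Require Import all_boot all_order all_algebra.
From mathcomp Require Import reals.
Set Implicit Arguments. Unset Strict Implicit. Unset Printing Implicit Defensive.
Import Order.TTheory GRing.Theory Num.Theory.
Local Open Scope ring_scope.

(* A candidate hyperedge on vertex set 'I_n (= [n]) is an ordered a-tuple of
   vertices; it is a genuine hyperedge when its entries are distinct. *)
Definition vset (a n : nat) (e : a.-tuple 'I_n) : {set 'I_n} := [set x in e].

Definition oriented (a n : nat) (H : {set a.-tuple 'I_n}) : bool :=
  [forall e in H, uniq e] &&
  [forall e in H, forall f in H, (vset e == vset f) ==> (e == f)].

Definition Ofam (a n m : nat) : {set {set a.-tuple 'I_n}} :=
  [set H : {set a.-tuple 'I_n} | oriented H && (#|H| == m)].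

Definition ncol (n b : nat) (C : {ffun 'I_n -> 'I_b}) (j : 'I_b) : nat :=
  #|[set v | C v == j]|.

Definition ncolseq (a n b : nat) (H : {set a.-tuple 'I_n})
  (C : {ffun 'I_n -> 'I_b}) (s : a.-tuple 'I_b) : nat :=
  #|[set e in H | map_tuple C e == s]|.

Definition good (R : realType) (a n b m : nat) (eps : R)
  (H : {set a.-tuple 'I_n}) : bool :=
  [forall C : {ffun 'I_n -> 'I_b}, forall s : a.-tuple 'I_b,
    let p := \prod_(i < a) ((ncol C (tnth s i))%:R / n%:R) in
    ((p - eps) * m%:R <= (ncolseq H C s)%:R) &&
    ((ncolseq H C s)%:R <= (p + eps) * m%:R)].

Definition bad (R : realType) (a n b m : nat) (eps : R)
  : {set {set a.-tuple 'I_n}} :=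
  [set H in Ofam a n m | ~~ good b m eps H].

(* Main.v *)
Require Import Defs.
From HB Require Import structures.
From mathcomp Require Import all_boot all_order all_algebra.
From mathcomp Require Import reals sequences exp.
From mathcomp Require Import ring lra.
Import Order.TTheory GRing.Theory Num.Theory.
Local Open Scope ring_scope.

Lemma tangent (R : realFieldType) (x h : R) k : 0 <= x -> 0 <= x + h ->
  x ^+ k.+1 + k.+1%:R * x ^+ k * h <= (x + h) ^+ k.+1.
Proof.
move=> x0 xh0; elim: k => [|k IH]; first by rewrite expr1 expr0 mulr1 mul1r.
rewrite [(x + h) ^+ k.+2]exprS.
apply: le_trans (ler_wpM2l xh0 IH).
have hx : 0 <= x ^+ k by apply: exprn_ge0.
have e1 : (x + h) * (x ^+ k.+1 + k.+1%:R * x ^+ k * h) =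
   x ^+ k.+2 + k.+2%:R * x ^+ k.+1 * h + k.+1%:R * x ^+ k * (h * h).
  rewrite !exprS -[k.+2]addn1 -[k.+1]addn1 !natrD; ring.
rewrite e1 lerDl; apply: mulr_ge0; first by apply: mulr_ge0.
by rewrite -expr2 sqr_ge0.
Qed.

Lemma step (R : realFieldType) (N m : nat) (w W F1 F2 : R) : (0 < N)%N -> 0 <= w -> 0 <= W ->
  F1 * N%:R ^+ m <= 'C(N, m)%:R * W ^+ m ->
  F2 * N%:R ^+ m.+1 <= 'C(N, m.+1)%:R * W ^+ m.+1 ->
  (w * F1 + F2) * N.+1%:R ^+ m.+1 <= 'C(N.+1, m.+1)%:R * (w + W) ^+ m.+1.
Proof.
move=> N0 w0 W0 h1 h2.
have Np : 0 < N%:R :> R by rewrite ltr0n.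
set mu := W / N%:R.
have mu0 : 0 <= mu by apply: divr_ge0 => //; apply: ltW.
have eW : W = N%:R * mu by rewrite /mu mulrC divfK // gt_eqF.
have h1' : F1 <= 'C(N, m)%:R * mu ^+ m.
  rewrite /mu expr_div_n mulrA ler_pdivlMr ?exprn_gt0 //.
have h2' : F2 <= 'C(N, m.+1)%:R * mu ^+ m.+1.
  rewrite /mu expr_div_n mulrA ler_pdivlMr ?exprn_gt0 //.
clearbody mu.
have i1 : (N.+1 * 'C(N, m))%N = (m.+1 * 'C(N.+1, m.+1))%N by rewrite -mul_bin_diag.
have i2 : (N.+1 * 'C(N, m.+1))%N = ((N - m) * 'C(N.+1, m.+1))%N by rewrite mul_bin_down.
have i2' : N.+1%:R * 'C(N, m.+1)%:R = (N%:R - m%:R) * 'C(N.+1, m.+1)%:R :> R.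
  rewrite -natrM i2 natrM; case: (leqP m N) => hm; first by rewrite natrB.
  by rewrite bin_small ?ltnS // !mulr0.
have i1' : N.+1%:R * 'C(N, m)%:R = m.+1%:R * 'C(N.+1, m.+1)%:R :> R by rewrite -!natrM i1.
have C0 : 0 <= 'C(N.+1, m.+1)%:R :> R by apply: ler0n.
apply: (@le_trans _ _ ((w * ('C(N, m)%:R * mu ^+ m) + 'C(N, m.+1)%:R * mu ^+ m.+1) * N.+1%:R ^+ m.+1)).
  apply: ler_wpM2r; first by apply: exprn_ge0; apply: ler0n.
  by apply: lerD => //; apply: ler_wpM2l.
have T := @tangent R (N.+1%:R * mu) (w - mu) m (mulr_ge0 (ler0n _ _) mu0).
have : 0 <= N.+1%:R * mu + (w - mu).
  have -> : N.+1%:R * mu + (w - mu) = w + W by rewrite eW -addn1 natrD; ring.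
  by apply: addr_ge0.
move=> /T {}T.
have -> : w + W = N.+1%:R * mu + (w - mu) by rewrite eW -addn1 natrD; ring.
apply: le_trans (ler_wpM2l C0 T); rewrite le_eqVlt; apply/orP; left; apply/eqP.
rewrite !exprS !exprMn.
set X := N.+1%:R ^+ m; set Y := mu ^+ m.
have -> : (w * ('C(N, m)%:R * Y) + 'C(N, m.+1)%:R * (mu * Y)) * (N.+1%:R * X)
   = X * Y * (w * (N.+1%:R * 'C(N, m)%:R) + mu * (N.+1%:R * 'C(N, m.+1)%:R)) by ring.
rewrite i1' i2'.
rewrite -[N.+1]addn1 -[m.+1]addn1 !natrD; ring.
Qed.

Section Core.
Variables (R : realType) (T K : finType) (cls : T -> K) (U : {set T}).

Definition injcls (H : {set T}) : bool :=
  [forall e in H, forall f in H, (cls e == cls f) ==> (e == f)].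

Lemma injclsP (H : {set T}) : reflect (forall e f, e \in H -> f \in H -> cls e = cls f -> e = f) (injcls H).
Proof.
apply: (iffP forall_inP) => [Hi e f He Hf ef | Hi e He].
  by move: (Hi e He) => /forall_inP/(_ f Hf)/implyP/(_ (introT eqP ef))/eqP.
apply/forall_inP => f Hf; apply/implyP => /eqP ef; apply/eqP; exact: Hi.
Qed.

Definition OA (A : {set K}) (m : nat) : {set {set T}} :=
  [set H : {set T} | [&& H \subset U, [forall e in H, cls e \in A], injcls H & #|H| == m]].

Definition FF (g : T -> R) A m := \sum_(H in OA A m) \prod_(e in H) g e.
Definition ww (g : T -> R) k := \sum_(e in U | cls e == k) g e.

Lemma OA0 (A : {set K}) : OA A 0 = [set set0].
Proof.
apply/setP => H; rewrite !inE; apply/idP/idP.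
  by case/and4P => _ _ _ /eqP /cards0_eq ->.
move/eqP->; rewrite sub0set cards0 eqxx andbT /=.
apply/andP; split; first by apply/forall_inP => e; rewrite inE.
by apply/injclsP => e f; rewrite inE.
Qed.

Lemma FF0 g (A : {set K}) : FF g A 0 = 1.
Proof. by rewrite /FF OA0 big_set1 big_set0. Qed.

Lemma FFset0 g m : FF g set0 m.+1 = 0.
Proof.
rewrite /FF big_pred0 // => H; rewrite !inE; apply/negP => /and4P[_ /forall_inP HA _ /eqP Hc].
have : (0 < #|H|)%N by rewrite Hc.
by case/card_gt0P => e He; move: (HA e He); rewrite inE.
Qed.

Lemma Frec g (A : {set K}) (k : K) m : k \notin A ->
  FF g (k |: A) m.+1 = ww g k * FF g A m + FF g A m.+1.
Proof.
move=> kA.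
rewrite /FF (bigID (fun H : {set T} => [exists e in H, cls e == k])) /=.
congr (_ + _); last first.
  apply: eq_bigl => H; rewrite !inE; apply/idP/idP.
  - case/andP => /and4P[HU /forall_inP HA Hi Hc] /existsPn Hk.
    apply/and4P; split => //; apply/forall_inP => e He.
    have := HA e He; rewrite !inE; case/orP => // /eqP ek.
    by move: (Hk e); rewrite He ek eqxx.
  - case/and4P => HU /forall_inP HA Hi Hc.
    apply/andP; split.
      apply/and4P; split => //; apply/forall_inP => e He; by rewrite !inE HA ?orbT.
    apply/existsPn => e; apply/negP => /andP[He /eqP ek].
    by move: (HA e He); rewrite ek (negbTE kA).
rewrite /ww big_distrl /=.
transitivity (\sum_(H in OA (k |: A) m.+1 | [exists e in H, cls e == k])
   \sum_(e in U | cls e == k) (if e \in H then \prod_(f in H) g f else 0)).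
  apply: eq_bigr => H /andP[HO /existsP[e0 /andP[He0 /eqP e0k]]].
  rewrite -big_mkcondr /= [RHS](big_pred1 e0) // => e.
  move: HO; rewrite inE => /and4P[/subsetP HU _ /injclsP Hi _].
  apply/idP/eqP.
    by case/andP => /andP[_ /eqP ek] He; apply: Hi => //; rewrite ek e0k.
  by move=> ->; rewrite HU //= e0k eqxx He0.
rewrite exchange_big /=; apply: eq_bigr => e /andP[eU /eqP ek].
rewrite -big_mkcondr /= big_distrr /=.
rewrite (reindex_onto (fun H' => e |: H') (fun H => H :\ e)) /=; last first.
  by move=> H /andP[_ He]; rewrite setD1K.
apply: eq_big => H'.
  apply/idP/idP.
  - case/andP => /andP[/andP[HO _] _] /eqP Hd.
    have eH' : e \notin H' by rewrite -Hd setD11.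
    move: HO; rewrite !inE => /and4P[HU /forall_inP HA /injclsP Hi Hc].
    apply/and4P; split.
    + by apply: subset_trans HU; apply: subsetUr.
    + apply/forall_inP => f Hf.
      have := HA f (setU1r _ Hf); rewrite !inE; case/orP => // /eqP fk.
      have fe : f = e by apply: Hi; rewrite ?setU11 ?setU1r // fk ek.
      by move: eH'; rewrite -fe Hf.
    + by apply/injclsP => f1 f2 H1 H2; apply: Hi; apply: setU1r.
    + by move: Hc; rewrite cardsU1 eH'.
  - rewrite inE => /and4P[HU /forall_inP HA /injclsP Hi Hc].
    have eH' : e \notin H' by apply/negP => /HA; rewrite ek (negbTE kA).
    rewrite setU11 andbT setU1K // eqxx andbT.
    apply/andP; split; last by apply/existsP; exists e; rewrite setU11 ek eqxx.
    rewrite inE; apply/and4P; split.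
    + by rewrite subUset sub1set eU HU.
    + apply/forall_inP => f; rewrite !inE; case/orP => [/eqP -> | Hf].
        by rewrite ek eqxx.
      by rewrite HA ?orbT.
    + apply/injclsP => f1 f2; rewrite !inE.
      case/orP => [/eqP -> | H1]; case/orP => [/eqP -> | H2] //.
      * by move=> ef2; move: (HA f2 H2); rewrite -ef2 ek (negbTE kA).
      * by move=> ef1; move: (HA f1 H1); rewrite ef1 ek (negbTE kA).
      * exact: Hi.
    + by rewrite cardsU1 eH' (eqP Hc).
move=> /andP[_ /eqP Hd].
have eH' : e \notin H' by rewrite -Hd setD11.
by rewrite big_setU1.
Qed.

Lemma FF_bound g : (forall e, 0 <= g e) -> forall (A : {set K}) m,
  FF g A m * #|A|%:R ^+ m <= 'C(#|A|, m)%:R * (\sum_(k in A) ww g k) ^+ m.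
Proof.
move=> g0.
have w0 k : 0 <= ww g k by apply: sumr_ge0 => e _; apply: g0.
suff H : forall N (A : {set K}), #|A| = N -> forall m,
    FF g A m * N%:R ^+ m <= 'C(N, m)%:R * (\sum_(k in A) ww g k) ^+ m.
  by move=> A m; apply: H.
elim=> [|N IH] A cA m.
  move/cards0_eq: cA => ->; case: m => [|m]; first by rewrite FF0 !expr0 mulr1 ?bin0 ?mul1r.
  by rewrite FFset0 mul0r bin0n mul0r.
case: m => [|m]; first by rewrite FF0 !expr0 mulr1 ?bin0 ?mul1r.
have : (0 < #|A|)%N by rewrite cA.
case/card_gt0P => k kA.
have kA' : k \notin A :\ k by rewrite setD11.
have cA' : #|A :\ k| = N by move: cA; rewrite (cardsD1 k A) kA add1n => -[].
have eA : A = k |: (A :\ k) by rewrite setD1K.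
move: (A :\ k) kA' cA' eA => A' kA' cA' eA.
rewrite eA Frec // big_setU1 //=.
have W0 : 0 <= \sum_(k0 in A') ww g k0 by apply: sumr_ge0.
case: N IH cA cA' => [|N] IH cA cA'.
  move/cards0_eq: cA' => e0; subst A'.
  rewrite big_set0 addr0.
  case: m => [|m]; first by rewrite FF0 FFset0 addr0 mulr1 !expr1 ?mul1r ?bin1 ?mul1r ?mulr1.
  rewrite !FFset0 mulr0 addr0 mul0r; apply: mulr_ge0; first by apply: ler0n.
  by apply: exprn_ge0.
apply: step => //; by apply: IH.
Qed.

Lemma FF_const g (c : R) : forall (A : {set K}), (forall k, k \in A -> ww g k = c) ->
  forall m, FF g A m = 'C(#|A|, m)%:R * c ^+ m.
Proof.
suff H : forall N (A : {set K}), #|A| = N -> (forall k, k \in A -> ww g k = c) ->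
    forall m, FF g A m = 'C(N, m)%:R * c ^+ m.
  by move=> A hA m; apply: H.
elim=> [|N IH] A cA hA m.
  move/cards0_eq: cA => ->; case: m => [|m]; first by rewrite FF0 !expr0 mulr1 ?bin0 ?mul1r.
  by rewrite FFset0 bin0n mul0r.
case: m => [|m]; first by rewrite FF0 !expr0 mulr1 ?bin0 ?mul1r.
have : (0 < #|A|)%N by rewrite cA.
case/card_gt0P => k kA.
have kA' : k \notin A :\ k by rewrite setD11.
have cA' : #|A :\ k| = N by move: cA; rewrite (cardsD1 k A) kA add1n => -[].
have hA' : forall k0, k0 \in A :\ k -> ww g k0 = c by move=> k0; rewrite inE => /andP[_ /hA].
have eA : A = k |: (A :\ k) by rewrite setD1K.
rewrite eA Frec // (hA k kA) !(IH (A :\ k)) // binS natrD exprS; ring.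
Qed.

Lemma FF1 (A : {set K}) m : FF (fun=> 1) A m = #|OA A m|%:R.
Proof.
rewrite /FF (eq_bigr (fun _ => 1)); first by rewrite sumr_const.
by move=> H _; rewrite big1_eq.
Qed.

Lemma FF_ratio (g : T -> R) (Aall : {set K}) (c : R) m : 0 <= c -> (forall e, 0 <= g e) ->
  (forall k, k \in Aall -> ww (fun=> 1) k = c) -> (forall e, e \in U -> cls e \in Aall) ->
  FF g Aall m * #|U|%:R ^+ m <= #|OA Aall m|%:R * (\sum_(e in U) g e) ^+ m.
Proof.
move=> c0 g0 hc hU.
have eU : #|U|%:R = #|Aall|%:R * c :> R.
  have -> : #|U|%:R = \sum_(e in U) (1 : R) by rewrite sumr_const.
  rewrite (partition_big cls (mem Aall)) //=.
  rewrite (eq_bigr (fun _ => c)); first by rewrite sumr_const mulr_natl.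
  by move=> k kA; rewrite -(hc k kA).
have eW : \sum_(e in U) g e = \sum_(k in Aall) ww g k.
  by rewrite (partition_big cls (mem Aall)).
rewrite -FF1 (@FF_const (fun=> 1) c Aall hc) eU eW exprMn mulrA.
rewrite [_ * c ^+ m * _]mulrC mulrA [_ * 'C(_, _)%:R]mulrC.
apply: ler_wpM2r; first by apply: exprn_ge0.
exact: FF_bound.
Qed.

End Core.
Arguments OA {T K}. Arguments FF {R T K}. Arguments ww {R T K}. Arguments injcls {T K}.



Lemma card_colseq (n b : nat) (C : {ffun 'I_n -> 'I_b}) k (s : k.-tuple 'I_b) :
  #|[set e : k.-tuple 'I_n | map_tuple C e == s]| = (\prod_(i < k) ncol C (tnth s i))%N.
Proof.
elim: k s => [|k IH] s.
  rewrite big_ord0.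
  rewrite (_ : [set e : 0.-tuple 'I_n | map_tuple C e == s] = setT).
    by rewrite cardsT card_tuple expn0.
  by apply/setP => e; rewrite !inE -val_eqE; case: e => [[] // ?]; case: s => [[] // ?].
case/tupleP: s => y s'.
rewrite big_ord_recl tnth0.
under eq_bigr do rewrite tnthS.
rewrite -IH /ncol -cardsX.
rewrite -(card_imset _ (f := fun p : 'I_n * k.-tuple 'I_n => [tuple of p.1 :: p.2])); last first.
  move=> [x1 e1] [x2 e2] /= /(congr1 val) /= [-> /val_inj ->] //.
apply: eq_card => e; case/tupleP: e => x e'.
rewrite inE; apply/idP/imsetP.
- rewrite -val_eqE /= eqseq_cons => /andP[xy ee].
  exists (x, e') => //; rewrite !inE xy /=.
  by rewrite -val_eqE.
- case=> [[x2 e2]]; rewrite !inE /= => /andP[xy ee] /(congr1 val) /= [-> /val_inj ->].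
  by rewrite -val_eqE /= eqseq_cons xy /=; rewrite -val_eqE in ee.
Qed.

Lemma card_Uset (a n : nat) : #|[set e : a.-tuple 'I_n | uniq e]| = (n ^_ a)%N.
Proof.
have := card_uniq_tuples a (@predT 'I_n).
rewrite (_ : #|predT| = n); last exact: card_ord.
move=> <-; apply: eq_card => e; by rewrite !inE all_predT.
Qed.

Lemma ffact_ge (n a : nat) : ((n - a) ^ a <= n ^_ a)%N.
Proof.
elim: a n => [|a IH] n; first by rewrite expn0 ffactn0.
rewrite ffactnS expnS.
apply: leq_mul; first by apply: leq_subr.
have -> : (n - a.+1 = n.-1 - a)%N by rewrite subnS -subn1 subnAC subn1.
exact: IH.
Qed.

Lemma ffact_real (R : realFieldType) (n a : nat) : (a <= n)%N -> (0 < a)%N ->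
  n%:R ^+ a - (a * a)%:R * n%:R ^+ a.-1 <= (n ^_ a)%:R :> R.
Proof.
move=> an a0.
apply: (@le_trans _ _ ((n - a)%N%:R ^+ a)); last by rewrite -natrX ler_nat ffact_ge.
case: a an a0 => // a an _ /=.
have T := @tangent R n%:R (- a.+1%:R) a (ler0n _ _).
have h0 : 0 <= n%:R + - a.+1%:R :> R by rewrite subr_ge0 ler_nat.
rewrite natrB //; apply: le_trans (T h0).
rewrite natrM; rewrite le_eqVlt; apply/orP; left; apply/eqP; ring.
Qed.

Section Ana.
Variable R : realType.

Lemma expR_up (l : R) : 0 <= l -> l <= 1/2 -> l <= expR l - 1 <= l + 2 * l ^+ 2.
Proof.
move=> l0 l1.
have h1 := expR_ge1Dx l.
have h2 := expR_ge1Dx (- l).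
have h3 := expRxMexpNx_1 l.
have E0 := expR_gt0 l.
apply/andP; split; first lra.
set E := expR l in h1 h3 E0 *; set F := expR (- l) in h2 h3 *.
have : E * (1 - l) <= 1.
  by rewrite -h3; apply: ler_wpM2l; [apply: ltW | lra].
move=> h4.
nra.
Qed.

Lemma expR_lo (l : R) : 0 <= l -> - l <= expR (- l) - 1 <= - l + l ^+ 2.
Proof.
move=> l0.
have h1 := expR_ge1Dx l.
have h2 := expR_ge1Dx (- l).
have h3 := expRxMexpNx_1 l.
have F0 := expR_gt0 (- l).
apply/andP; split; first lra.
set E := expR l in h1 h3 *; set F := expR (- l) in h2 h3 F0 *.
have : F * (1 + l) <= 1.
  by rewrite -h3 [E * F]mulrC; apply: ler_wpM2l; [apply: ltW | lra].
move=> h4.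
nra.
Qed.

Lemma expo_up (e p q xm1 : R) : 0 < e -> e <= 1 -> 0 <= p -> p <= 1 -> 0 <= q ->
  q <= p + e / 2 -> e / 12 <= xm1 -> xm1 <= e / 12 + 2 * (e / 12) ^+ 2 ->
  xm1 * q - e / 12 * (p + e) <= - (e ^+ 2 / 48).
Proof.
move=> e0 e1 p0 p1 q0 qp x1 x2.
have h1 : xm1 * q <= xm1 * (p + e / 2) by apply: ler_wpM2l => //; lra.
have h2 : xm1 * (p + e / 2) <= (e / 12 + 2 * (e / 12) ^+ 2) * (p + e / 2).
  by apply: ler_wpM2r => //; lra.
apply: le_trans (_ : (e / 12 + 2 * (e / 12) ^+ 2) * (p + e / 2) - e / 12 * (p + e) <= _).
  lra.
have : 0 <= e ^+ 2 * (1 - p) by apply: mulr_ge0; [apply: sqr_ge0 | lra].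
have : 0 <= e ^+ 2 * (1 - e) by apply: mulr_ge0; [apply: sqr_ge0 | lra].
rewrite !expr2; nra.
Qed.

Lemma expo_lo (e p q xm1 : R) : 0 < e -> e <= 1 -> 0 <= p -> p <= 1 ->
  p - e / 2 <= q -> - (e / 12) <= xm1 -> xm1 <= - (e / 12) + (e / 12) ^+ 2 ->
  xm1 * q + e / 12 * (p - e) <= - (e ^+ 2 / 48).
Proof.
move=> e0 e1 p0 p1 qp x1 x2.
have xn : xm1 <= 0.
  have : (e / 12) ^+ 2 <= e / 12.
    rewrite expr2 ler_piMl //; lra.
  lra.
have h1 : xm1 * q <= xm1 * (p - e / 2) by rewrite ler_wnM2l.
have h2 : xm1 * p <= (- (e / 12) + (e / 12) ^+ 2) * p by apply: ler_wpM2r.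
have : 0 <= e ^+ 2 * (1 - p) by apply: mulr_ge0; [apply: sqr_ge0 | lra].
have : 0 <= e ^+ 2 by apply: sqr_ge0.
rewrite !expr2 in x2 h2 *; nra.
Qed.

Lemma qbounds (Nt Ut G kG p e r : R) : 0 < Nt -> p = G / Nt -> 0 <= kG -> kG <= G ->
  G <= Nt -> Ut <= Nt -> G - kG <= Nt - Ut -> Nt - Ut <= r * Nt -> r <= e / 4 ->
  0 < e -> e <= 1 -> 0 < Ut /\ p - e / 2 <= kG / Ut /\ kG / Ut <= p + e / 2.
Proof.
move=> N0 pG k0 kGG GN UN GU Ur re e0 e1.
have U0 : 0 < Ut.
  have : r * Nt <= e / 4 * Nt by apply: ler_wpM2r => //; apply: ltW.
  nra.
have eG : G = p * Nt by rewrite pG divfK // gt_eqF.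
split => //; split.
- rewrite ler_pdivlMr //.
  case: (lerP 0 (p - e/2)) => h; last by nra.
  have : (p - e / 2) * Ut <= (p - e / 2) * Nt by apply: ler_wpM2l.
  have : r * Nt <= e / 4 * Nt by apply: ler_wpM2r => //; apply: ltW.
  nra.
- rewrite ler_pdivrMr //.
  have p0 : 0 <= p by rewrite pG; apply: divr_ge0; lra.
  have p1 : p <= 1 by rewrite pG ler_pdivrMr // mul1r.
  have : p * (Nt - Ut) <= 1 * (Nt - Ut) by apply: ler_wpM2r => //; lra.
  have : r * Nt <= e / 4 * Nt by apply: ler_wpM2r => //; apply: ltW.
  nra.
Qed.

End Ana.

Section Conc.
Variables (R : realType) (a n b : nat).
Local Notation T := (a.-tuple 'I_n).
Definition Uset : {set T} := [set e : T | uniq e].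
Definition Aall : {set {set 'I_n}} := [set X : {set 'I_n} | #|X| == a].

Lemma card_vset (e : T) : uniq e -> #|vset e| = a.
Proof. by move=> ue; rewrite /vset cardsE (elimT card_uniqP ue) size_tuple. Qed.

Lemma Ofam_OA m : Ofam a n m = OA (@vset a n) Uset Aall m.
Proof.
apply/setP => H; rewrite !inE /oriented /injcls. apply/idP/idP.
- case/andP => /andP[/forall_inP Hu Hi] Hc; apply/and4P; split => //.
    by apply/subsetP => e He; rewrite inE (Hu e He).
  by apply/forall_inP => e He; rewrite inE card_vset ?(Hu e He).
- case/and4P => /subsetP HU _ Hi Hc; apply/andP; split => //; apply/andP; split => //.
  by apply/forall_inP => e He; move: (HU e He); rewrite inE.
Qed.

Lemma U_class (X : {set 'I_n}) : X \in Aall -> ww (@vset a n) Uset (fun=> 1 : R) X = (a ^_ a)%:R.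
Proof.
rewrite inE => /eqP cX.
rewrite /ww (eq_bigr (fun _ => (1%N)%:R)) // -natr_sum sum1dep_card.
have -> : #|[set x in Uset | vset x == X]| = #|[set t : T | all (mem X) t & uniq t]|.
  2: by rewrite card_uniq_tuples cX.
apply: eq_card => e; rewrite !inE.
apply/idP/idP.
- case/andP => ue /eqP <-; rewrite ue andbT.
  apply/allP => x xe; rewrite -[mem _ x]/(x \in vset e) /vset inE //.
- case/andP => /allP ae ue; rewrite ue /=.
  rewrite eqEcard card_vset // cX leqnn andbT.
  by apply/subsetP => x; rewrite /vset inE => /ae.
Qed.

Lemma vset_Aall (e : T) : e \in Uset -> vset e \in Aall.
Proof. by rewrite !inE => ue; rewrite card_vset. Qed.

Variables (C : {ffun 'I_n -> 'I_b}) (s : a.-tuple 'I_b).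

Definition Gset : {set T} := [set e : T | map_tuple C e == s].
Definition kG := #|Uset :&: Gset|.

Lemma prod_weight (x : R) (H : {set T}) :
  \prod_(e in H) (if e \in Gset then x else 1) = x ^+ ncolseq H C s.
Proof.
rewrite -big_mkcondr /= /ncolseq -prodr_const; apply: eq_bigl => e.
by rewrite !inE.
Qed.

Lemma sum_weight (x : R) :
  \sum_(e in Uset) (if e \in Gset then x else 1) = #|Uset|%:R + (x - 1) * kG%:R.
Proof.
rewrite (bigID (mem Gset)) /=.
rewrite (eq_bigr (fun _ => x)); last by move=> e /andP[_ ->].
rewrite [X in _ + X](eq_bigr (fun _ => 1)); last by move=> e /andP[_ /negbTE ->].
rewrite !sumr_const.
have -> : #|[pred i in Uset | i \in Gset]| = kG by rewrite /kG -cardsE; apply: eq_card => e; rewrite !inE.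
have : #|[pred i in Uset | i \notin Gset]| = (#|Uset| - kG)%N.
  by rewrite /kG -cardsD -cardsE; apply: eq_card => e; rewrite !inE andbC.
move=> ->; rewrite natrB; last by rewrite /kG subset_leq_card // subsetIl.
rewrite -mulr_natl; ring.
Qed.

Lemma mgf (x : R) m : 0 < x ->
  (\sum_(H in Ofam a n m) x ^+ ncolseq H C s) * #|Uset|%:R ^+ m <=
  #|Ofam a n m|%:R * (#|Uset|%:R + (x - 1) * kG%:R) ^+ m.
Proof.
move=> x0.
rewrite -sum_weight Ofam_OA.
have -> : \sum_(H in OA (@vset a n) Uset Aall m) x ^+ ncolseq H C s =
   FF (@vset a n) Uset (fun e => if e \in Gset then x else 1) Aall m.
  by rewrite /FF; apply: eq_bigr => H _; rewrite prod_weight.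
apply: (@FF_ratio R _ _ (@vset a n) Uset _ Aall (a ^_ a)%:R m).
- exact: ler0n.
- by move=> e; case: ifP => _; [apply: ltW | apply: ler01].
- exact: U_class.
- exact: vset_Aall.
Qed.

End Conc.
Arguments kG {a n b} C s. Arguments Gset {a n b} C s.

Section Tail.
Variables (R : realType) (a n b : nat).
Variables (C : {ffun 'I_n -> 'I_b}) (s : a.-tuple 'I_b).
Local Notation T := (a.-tuple 'I_n).

Lemma markov (y t : R) (P : pred {set T}) m :
  (forall H, H \in Ofam a n m -> P H -> t <= y * (ncolseq H C s)%:R) ->
  (\sum_(H in Ofam a n m) (if P H then 1 else 0)) * expR t <=
  \sum_(H in Ofam a n m) expR y ^+ ncolseq H C s.
Proof.
move=> hP; rewrite big_distrl /=; apply: ler_sum => H HO.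
case: ifP => PH; last by rewrite mul0r exprn_ge0 // expR_ge0.
by rewrite mul1r -expRM_natr ler_expR; apply: hP.
Qed.

Lemma mgf2 (x : R) m : 0 < x -> (0 < #|Uset a n|)%N ->
  \sum_(H in Ofam a n m) x ^+ ncolseq H C s <=
  #|Ofam a n m|%:R * expR ((x - 1) * ((kG C s)%:R / #|Uset a n|%:R) * m%:R).
Proof.
move=> x0 U0.
have U0' : 0 < #|Uset a n|%:R :> R by rewrite ltr0n.
set q := (kG C s)%:R / #|Uset a n|%:R.
have q0 : 0 <= q by apply: divr_ge0; apply: ler0n.
have q1 : q <= 1.
  by rewrite ler_pdivrMr // mul1r ler_nat /kG subset_leq_card // subsetIl.
have h := @mgf R a n b C s x m x0.
have e1 : #|Uset a n|%:R + (x - 1) * (kG C s)%:R = #|Uset a n|%:R * (1 + (x - 1) * q).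
  by rewrite /q; field; rewrite gt_eqF.
rewrite e1 exprMn in h.
have h2 : \sum_(H in Ofam a n m) x ^+ ncolseq H C s <= #|Ofam a n m|%:R * (1 + (x - 1) * q) ^+ m.
  rewrite -(ler_pM2r (exprn_gt0 m U0')); apply: le_trans h _.
  by rewrite le_eqVlt; apply/orP; left; apply/eqP; ring.
apply: (le_trans h2); apply: ler_wpM2l; first by apply: ler0n.
rewrite expRM_natr; apply: lerXn2r.
- by rewrite nnegrE; nra.
- by rewrite nnegrE; apply: expR_ge0.
- exact: expR_ge1Dx.
Qed.

Lemma div_exp (S O u t v : R) : S * expR t <= O * expR u -> u - t <= v -> 0 <= O ->
  S <= O * expR v.
Proof.
move=> h uv O0.
have h1 : S <= O * expR u / expR t by rewrite ler_pdivlMr ?expR_gt0.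
apply: (le_trans h1); rewrite -mulrA -expRB; apply: ler_wpM2l => //.
by rewrite ler_expR.
Qed.

Definition pp : R := \prod_(i < a) ((ncol C (tnth s i))%:R / n%:R).

Lemma tail (e eps : R) m : 0 < e -> e <= 1 -> e <= eps -> (0 < #|Uset a n|)%N ->
  0 <= pp -> pp <= 1 ->
  pp - e / 2 <= (kG C s)%:R / #|Uset a n|%:R ->
  (kG C s)%:R / #|Uset a n|%:R <= pp + e / 2 ->
  \sum_(H in Ofam a n m) (if ~~ (((pp - eps) * m%:R <= (ncolseq H C s)%:R) &&
                               ((ncolseq H C s)%:R <= (pp + eps) * m%:R)) then 1 else 0)
  <= 2 * #|Ofam a n m|%:R * expR (- (e ^+ 2 / 48) * m%:R).
Proof.
move=> e0 e1 ee U0 p0 p1 ql qu.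
set q := (kG C s)%:R / #|Uset a n|%:R in ql qu.
have q0 : 0 <= q by apply: divr_ge0; apply: ler0n.
have m0 : 0 <= m%:R :> R by apply: ler0n.
have O0 : 0 <= #|Ofam a n m|%:R :> R by apply: ler0n.
set cnt := fun H => ncolseq H C s.
apply: (@le_trans _ _ (\sum_(H in Ofam a n m) (if (pp + eps) * m%:R < (cnt H)%:R then 1 else 0)
   + \sum_(H in Ofam a n m) (if (cnt H)%:R < (pp - eps) * m%:R then 1 else 0))).
  rewrite -big_split /=; apply: ler_sum => H _; rewrite /cnt.
  case: (lerP ((pp - eps) * m%:R) (ncolseq H C s)%:R) => hA;
  case: (lerP (ncolseq H C s)%:R ((pp + eps) * m%:R)) => hB /=; lra.
rewrite (_ : 2 * _ * _ = #|Ofam a n m|%:R * expR (- (e ^+ 2 / 48) * m%:R) +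
  #|Ofam a n m|%:R * expR (- (e ^+ 2 / 48) * m%:R)); last by ring.
apply: lerD.
- pose l := e / 12.
  have l0 : 0 <= l by rewrite /l; lra.
  have mk := @markov l (l * ((pp + e) * m%:R)) (fun H => (pp + eps) * m%:R < (cnt H)%:R) m.
  have mg := @mgf2 (expR l) m (expR_gt0 l) U0.
  apply: div_exp (le_trans (mk _) mg) _ O0.
    move=> H _ /= hH; apply: ler_wpM2l => //; apply: ltW; apply: le_lt_trans hH.
    by apply: ler_wpM2r => //; lra.
  have := @expR_up R l l0 (ltac:(rewrite /l; lra)).
  case/andP => x1 x2.
  have := @expo_up R e pp q (expR l - 1) e0 e1 p0 p1 q0 qu x1 x2.
  rewrite -/l => h.
  have : ((expR l - 1) * q - l * (pp + e)) * m%:R <= - (e ^+ 2 / 48) * m%:R.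
    by apply: ler_wpM2r.
  move=> h'; apply: le_trans h'; rewrite -/q le_eqVlt; apply/orP; left; apply/eqP; ring.
- pose l := e / 12.
  have l0 : 0 <= l by rewrite /l; lra.
  have mk := @markov (- l) (- l * ((pp - e) * m%:R)) (fun H => (cnt H)%:R < (pp - eps) * m%:R) m.
  have mg := @mgf2 (expR (- l)) m (expR_gt0 (- l)) U0.
  apply: div_exp (le_trans (mk _) mg) _ O0.
    move=> H _ /= hH; rewrite !mulNr lerN2; apply: ler_wpM2l => //; apply: ltW.
    apply: lt_le_trans hH _.
    by apply: ler_wpM2r => //; lra.
  have := @expR_lo R l l0.
  case/andP => x1 x2.
  have := @expo_lo R e pp q (expR (- l) - 1) e0 e1 p0 p1 ql x1 x2.
  rewrite -/l => h.
  have : ((expR (- l) - 1) * q + l * (pp - e)) * m%:R <= - (e ^+ 2 / 48) * m%:R.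
    by apply: ler_wpM2r.
  move=> h'; apply: le_trans h'; rewrite -/q le_eqVlt; apply/orP; left; apply/eqP; ring.
Qed.


Lemma pq_ok (e : R) : (0 < a)%N -> (a <= n)%N -> 0 < e -> e <= 1 ->
  (a * a)%:R / n%:R <= e / 4 ->
  [/\ (0 < #|Uset a n|)%N, 0 <= pp, pp <= 1,
      pp - e / 2 <= (kG C s)%:R / #|Uset a n|%:R &
      (kG C s)%:R / #|Uset a n|%:R <= pp + e / 2].
Proof.
move=> a0 an e0 e1 re.
have n0 : (0 < n)%N by apply: leq_trans an.
have n0' : 0 < n%:R :> R by rewrite ltr0n.
have cU : #|Uset a n| = (n ^_ a)%N by rewrite /Uset card_Uset.
have U0 : (0 < #|Uset a n|)%N by rewrite cU ffact_gt0.
have ncn j : (ncol C j <= n)%N.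
  by apply: (leq_trans (max_card _)); rewrite card_ord.
have fi (i : 'I_a) : (0 <= (ncol C (tnth s i))%:R / n%:R :> R) &&
    ((ncol C (tnth s i))%:R / n%:R <= 1 :> R).
  apply/andP; split; first by apply: divr_ge0; apply: ler0n.
  by rewrite ler_pdivrMr // mul1r ler_nat.
have p0 : 0 <= pp by apply: prodr_ge0 => i _; case/andP: (fi i).
have p1 : pp <= 1 by apply: prodr_ile1 => i _; apply: fi.
have cT : #|{: a.-tuple 'I_n}| = (n ^ a)%N by rewrite card_tuple card_ord.
have eG : pp = (#|Gset C s|)%:R / n%:R ^+ a.
  rewrite /pp prodf_div /Gset card_colseq natr_prod; congr (_ / _).
  by rewrite prodr_const card_ord.
have kGG : (kG C s <= #|Gset C s|)%N by rewrite /kG subset_leq_card // subsetIr.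
have GT : (#|Gset C s| <= n ^ a)%N by rewrite -cT max_card.
have UT : (#|Uset a n| <= n ^ a)%N by rewrite -cT max_card.
have hGU : #|Gset C s|%:R - (kG C s)%:R <= (n ^ a)%N%:R - #|Uset a n|%:R :> R.
  have h1 := cardsID (Uset a n) (Gset C s).
  have h2 : (#|Gset C s :\: Uset a n| <= #|~: Uset a n|)%N.
    by apply: subset_leq_card; rewrite setDE subsetIr.
  have h3 := cardsC (Uset a n).
  rewrite cT in h3.
  have h4 : kG C s = #|Gset C s :&: Uset a n| by rewrite /kG setIC.
  rewrite -h3 -h1 h4 !natrD.
  have : (#|Gset C s :\: Uset a n|)%:R <= (#|~: Uset a n|)%:R :> R by rewrite ler_nat.
  lra.
have hNU : (n ^ a)%N%:R - #|Uset a n|%:R <= (a * a)%:R / n%:R * (n ^ a)%N%:R :> R.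
  rewrite cU natrX.
  have := @ffact_real R n a an a0.
  have -> : (a * a)%:R / n%:R * n%:R ^+ a = (a * a)%:R * n%:R ^+ a.-1 :> R.
    have -> : n%:R ^+ a = n%:R * n%:R ^+ a.-1 :> R by rewrite -exprS prednK.
    field; rewrite gt_eqF //.
  lra.
have Nt0 : 0 < (n ^ a)%N%:R :> R by rewrite ltr0n expn_gt0 n0.
have [_ [h1 h2]] := @qbounds R ((n ^ a)%N%:R) (#|Uset a n|%:R) (#|Gset C s|%:R) ((kG C s)%:R)
   pp e ((a * a)%:R / n%:R) Nt0 (ltac:(by rewrite eG natrX)) (ler0n _ _)
   (ltac:(by rewrite ler_nat)) (ltac:(by rewrite ler_nat)) (ltac:(by rewrite ler_nat))
   hGU hNU re e0 e1.
by split.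
Qed.

End Tail.
Arguments pp {R a n b} C s.

Lemma sum2_const (R : realType) (x : R) n b a :
  \sum_(C : {ffun 'I_n -> 'I_b}) \sum_(s : a.-tuple 'I_b) x = x *+ (b ^ a)%N *+ (b ^ n)%N.
Proof.
have cF : #|{: {ffun 'I_n -> 'I_b}}| = (b ^ n)%N by rewrite card_ffun !card_ord.
have cT : #|{: a.-tuple 'I_b}| = (b ^ a)%N by rewrite card_tuple !card_ord.
by rewrite -cF -cT !sumr_const.
Qed.

Theorem lemma13 (R : realType) (a b : nat) (ha : (2 <= a)%N) (hb : (2 <= b)%N)
  (eps : R) (heps : 0 < eps) (m : nat -> nat)
  (hm : forall M : R, exists N : nat, forall n : nat, (N <= n)%N ->
          M * n%:R <= (m n)%:R) :
  forall delta : R, 0 < delta ->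
  exists N : nat, forall n : nat, (N <= n)%N ->
    (#|@bad R a n b (m n) eps|)%:R <= delta * (#|Ofam a n (m n)|)%:R.
Proof.
move=> delta d0.
pose e : R := if eps <= 1 then eps else 1.
have e0 : 0 < e by rewrite /e; case: ifP => _; lra.
have e1 : e <= 1 by rewrite /e; case: ifP => h; [ | lra].
have ee : e <= eps by rewrite /e; case: ifP => h; [ | move/negbT: h; rewrite -ltNge => h; lra].
pose k : R := e ^+ 2 / 48.
have k0 : 0 < k by rewrite /k; apply: divr_gt0 => //; apply: exprn_gt0.
have b0 : 0 < b%:R :> R by rewrite ltr0n; apply: leq_trans hb.
pose K : R := 2 * b%:R / k.
have [N0 hN0] := hm K.
have x1 : 0 <= 4 * (a * a)%:R / e by apply: divr_ge0; [apply: mulr_ge0; [lra | apply: ler0n] | lra].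
have x2 : 0 <= 2 * (b%:R ^+ a) / delta by apply: divr_ge0; [apply: mulr_ge0; [lra | apply: exprn_ge0; lra] | lra].
have hN1 := archi_boundP x1.
have hN2 := archi_boundP x2.
set N1 := Num.Def.archi_bound _ in hN1.
set N2 := Num.Def.archi_bound _ in hN2.
exists (maxn N0 (maxn N1 (maxn N2 a))) => n.
rewrite !geq_max => /and4P[nN0 nN1 nN2 na].
have a0 : (0 < a)%N by apply: leq_trans ha.
have n0 : (0 < n)%N by apply: leq_trans na.
have n0' : 0 < n%:R :> R by rewrite ltr0n.
have re : (a * a)%:R / n%:R <= e / 4.
  rewrite ler_pdivrMr //.
  have : 4 * (a * a)%:R / e < n%:R.
    by apply: lt_le_trans hN1 _; rewrite ler_nat.
  rewrite ltr_pdivrMr // => h; lra.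
set M := m n.
set O := #|Ofam a n M|%:R.
set E := expR (- k * M%:R).
have O0 : 0 <= O by apply: ler0n.
(* union bound *)
have step1 : #|@bad R a n b M eps|%:R <=
   \sum_(C : {ffun 'I_n -> 'I_b}) \sum_(s : a.-tuple 'I_b)
   \sum_(H in Ofam a n M) (if ~~ (((@pp R a n b C s - eps) * M%:R <= (ncolseq H C s)%:R) &&
                               ((ncolseq H C s)%:R <= (@pp R a n b C s + eps) * M%:R)) then 1 else 0 : R).
  rewrite exchange_big /=.
  under [X in _ <= X]eq_bigr do rewrite exchange_big /=.
  rewrite exchange_big /=.
  have -> : #|@bad R a n b M eps|%:R = \sum_(H in Ofam a n M) (if H \in @bad R a n b M eps then 1 else 0) :> R.
    rewrite -big_mkcondr /= sumr_const; congr (_ %:R); apply: eq_card => H.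
    rewrite !inE /= unfold_in /= !inE; by case: (_ && (#|H| == M)).
  apply: ler_sum => H HO.
  have g0 : 0 <= \sum_(s : a.-tuple 'I_b) \sum_(C : {ffun 'I_n -> 'I_b})
     (if ~~ (((@pp R a n b C s - eps) * M%:R <= (ncolseq H C s)%:R) &&
      ((ncolseq H C s)%:R <= (@pp R a n b C s + eps) * M%:R)) then 1 else 0 : R).
    by apply: sumr_ge0 => s _; apply: sumr_ge0 => C _; case: ifP => _; [apply: ler01 | apply: lexx].
  case: ifP => [hb' | _]; last exact: g0.
  move: hb'; rewrite inE => /andP[_].
  rewrite /good negb_forall => /existsP[C0]; rewrite negb_forall => /existsP[s0] hv.
  have hv' : ~~ (((@pp R a n b C0 s0 - eps) * M%:R <= (ncolseq H C0 s0)%:R) &&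
      ((ncolseq H C0 s0)%:R <= (@pp R a n b C0 s0 + eps) * M%:R)) := hv.
  rewrite (bigD1 s0) // (bigD1 C0) // hv'.
  apply: (@le_trans _ _ (1 + 0 + 0)); first by rewrite !addr0.
  apply: lerD; first apply: lerD => //.
    by apply: sumr_ge0 => C _; case: ifP => _; [apply: ler01 | apply: lexx].
  by apply: sumr_ge0 => s _; apply: sumr_ge0 => C _; case: ifP => _; [apply: ler01 | apply: lexx].
have step2 : #|@bad R a n b M eps|%:R <= b%:R ^+ n * b%:R ^+ a * (2 * O * E).
  apply: (le_trans step1).
  apply: (@le_trans _ _ (\sum_(C : {ffun 'I_n -> 'I_b}) \sum_(s : a.-tuple 'I_b) (2 * O * E))).
    apply: ler_sum => C _; apply: ler_sum => s _.
    have [U0 p0 p1 ql qu] := @pq_ok R a n b C s e a0 na e0 e1 re.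
    exact: (@tail R a n b C s e eps M e0 e1 ee U0 p0 p1 ql qu).
  move: (2 * O * E) => X.
  rewrite sum2_const.
  rewrite -mulrnA -[X *+ _]mulr_natr natrM !natrX mulrC [_ ^+ a * _ ^+ n]mulrC; exact: lexx.
have hM : K * n%:R <= M%:R := hN0 n nN0.
have kK : k * K = 2 * b%:R by rewrite /K; field; rewrite gt_eqF.
pose y := expR (- (k * K)).
have y0 : 0 < y by apply: expR_gt0.
have Ey : E <= y ^+ n.
  rewrite /E /y -expRM_natr ler_expR.
  have : k * (K * n%:R) <= k * M%:R by apply: ler_wpM2l => //; apply: ltW.
  lra.
have hby : b%:R * y <= 1 / 2.
  have h1 := expR_ge1Dx (k * K).
  have h2 : expR (k * K) * y = 1 by rewrite /y expRxMexpNx_1.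
  rewrite kK in h1 h2.
  have : y * (1 + 2 * b%:R) <= y * expR (2 * b%:R) by apply: ler_wpM2l => //; apply: ltW.
  nra.
have Pn : b%:R ^+ n * E <= (1 / 2) ^+ n.
  apply: (@le_trans _ _ (b%:R ^+ n * y ^+ n)).
    by apply: ler_wpM2l => //; apply: exprn_ge0; apply: ltW.
  rewrite -exprMn; apply: lerXn2r => //; rewrite nnegrE.
    by apply: mulr_ge0; apply: ltW.
  lra.
have hn : (1 / 2 : R) ^+ n * n%:R <= 1.
  rewrite expr_div_n expr1n mul1r mulrC ler_pdivrMr ?exprn_gt0 // mul1r.
  have -> : (2 : R) ^+ n = (2 ^ n)%N%:R by rewrite natrX.
  by rewrite ler_nat ltnW // ltn_expl.
have hd : 2 * b%:R ^+ a < delta * n%:R.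
  have : 2 * b%:R ^+ a / delta < n%:R by apply: lt_le_trans hN2 _; rewrite ler_nat.
  by rewrite ltr_pdivrMr // [delta * _]mulrC.
have ba0 : 0 <= b%:R ^+ a :> R by apply: exprn_ge0; apply: ltW.
have hP : 2 * b%:R ^+ a * (1 / 2) ^+ n <= delta.
  rewrite -(ler_pM2r n0').
  have -> : 2 * b%:R ^+ a * (1 / 2 : R) ^+ n * n%:R = (2 * b%:R ^+ a) * ((1 / 2 : R) ^+ n * n%:R) by ring.
  apply: (@le_trans _ _ (2 * b%:R ^+ a)); last by apply: ltW.
  rewrite -[X in _ <= X]mulr1; apply: ler_wpM2l => //; lra.
apply: (le_trans step2).
have -> : b%:R ^+ n * b%:R ^+ a * (2 * O * E) = O * (2 * b%:R ^+ a * (b%:R ^+ n * E)) by ring.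
rewrite [delta * O]mulrC; apply: ler_wpM2l => //.
apply: le_trans hP; apply: ler_wpM2l => //; lra.
Qed.
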